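(* Let $0<q<1$. Then \[ \sum_{n=0}^{\infty}\frac{(1+q^{2n+1})\,q^{n}}{(1-q^{2n+1})^{2}}=\frac{\pi_{q}^{2}}{(1-q^{2})^{2}q^{1/2}}. \]
   Context: Let $0<q<1$. With $(z;q)_\infty=\prod_{k\ge0}(1-zq^k)$, Gosper's $q$-pi is $\pi_q=(1-q^2)q^{1/4}\frac{(q^2;q^2)_\infty^2}{(q;q^2)_\infty^2}$. *)

(* Defs.v *)
From Stdlib Require Import Reals.
Open Scope R_scope.

Fixpoint qpoch_fin (z q : R) (N : nat) : R :=
  match N with
  | O => 1
  | S n => qpoch_fin z q n * (1 - z * q ^ n)
  end.

Definition is_qpoch_inf (z q P : R) : Prop :=
  Un_cv (fun N => qpoch_fin z q N) P.

(* Gosper's q-pi, given the values A = (q^2;q^2)_inf and B = (q;q^2)_inf. *)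
Definition gosper_pi_q (q A B : R) : R :=
  (1 - q ^ 2) * Rpower q (1/4) * (A ^ 2 / B ^ 2).

(* Main.v *)
Require Import Defs.
From Stdlib Require Import Reals Lra Lia Psatz Arith.
Open Scope R_scope.

Definition cN0 (q X : R) : R := X^2*q^3 - X^3*q^7 - X^4*q^8 + X^5*q^12.
Definition cN1 (q X : R) : R := - X^1*q^2 - X^2*q^3 - 2*X^2*q^4 + X^2*q^6 + 2*X^3*q^7 + 2*X^3*q^8 + X^4*q^8 + 2*X^4*q^9 - X^4*q^11 - X^5*q^12 - 2*X^5*q^13.
Definition cN2 (q X : R) : R := X^1*q^2 + 2*X^1*q^3 + 2*X^2*q^4 + X^2*q^5 - X^2*q^6 - 2*X^2*q^7 - X^3*q^7 - 4*X^3*q^8 - X^3*q^9 - 2*X^4*q^9 - X^4*q^10 + X^4*q^11 + 2*X^4*q^12 + 2*X^5*q^13 + X^5*q^14.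
Definition cN3 (q X : R) : R := - 2*X^1*q^3 - X^1*q^4 - X^2*q^5 + 2*X^2*q^7 + X^2*q^8 + 2*X^3*q^8 + 2*X^3*q^9 + X^4*q^10 - 2*X^4*q^12 - X^4*q^13 - X^5*q^14.
Definition cN4 (q X : R) : R := X^1*q^4 - X^2*q^8 - X^3*q^9 + X^4*q^13.
Definition Nn (q X u : R) : R :=
  (cN0 q X + cN1 q X * u + cN2 q X * u^2 + cN3 q X * u^3 + cN4 q X * u^4)
  / ((1 - q*X) * (1 - q^3*X)^4).
Definition Tq (q u : R) : R := (1 + q*u) / (1 - q*u)^2.
Definition Krp (q X u : R) : R :=
  Tq q (q^2*u) / Tq q u * (1 - q^3*X*u) / (1 - q^4*X*u) * q^2 / (1 - q*u/X).
Definition Ep (q X u : R) : R :=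
  (1 - /(X*q^2)) * (1 - q^3*X*u) * (1 - q^4*X) * (1 - u/(X*q))
  / ((1 - q^3*X) * (1 - q^4*X*u) * (1 - /(X*q))).
Definition rho (q X : R) : R :=
  (1 - q^4*X) * (1 - q^2*X)^3 / ((1 - q^3*X)^3 * (1 - q*X)).
Definition R2 (q X u : R) : R :=
  Tq q (q^2*u) / Tq q u * (1 - q^3*X*u) / (1 - q^4*X*u) * (q^2*(X-u)/(X-q*u)).

Fixpoint Ff (q : R) (n k : nat) : R :=
  match k with
  | O => Tq q 1
  | S j => Ff q n j * R2 q ((q^2)^n) ((q^2)^j)
  end.

Definition Gf (q : R) (n k : nat) : R :=
  match k with
  | O => 0
  | S j => - Ff q n j * Krp q ((q^2)^n) ((q^2)^j) * Nn q ((q^2)^n) (q^2*(q^2)^j)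
           / ((q^2)^n * q^4 * (q^2)^j * (1 + q^3*(q^2)^j))
  end.

Lemma p2_pos (q : R) (m : nat) : 0 < q -> 0 < (q^2)^m.
Proof. intros; apply pow_lt; nra. Qed.

Lemma p2_le1 (q : R) (m : nat) : 0 < q -> q < 1 -> (q^2)^m <= 1.
Proof.
  intros. induction m; [simpl; lra|].
  change ((q^2)^(S m)) with (q^2 * (q^2)^m).
  assert (0 < (q^2)^m) by (apply p2_pos; auto). nra.
Qed.

Lemma p2_add (q : R) (a b : nat) : (q^2)^(a+b) = (q^2)^a * (q^2)^b.
Proof. apply pow_add. Qed.

Lemma p2_le (q : R) (a b : nat) : 0 < q -> q < 1 -> (a <= b)%nat -> (q^2)^b <= (q^2)^a.
Proof.
  intros. replace b with (a + (b - a))%nat by lia. rewrite p2_add.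
  assert (0 < (q^2)^a) by (apply p2_pos; auto).
  assert ((q^2)^(b-a) <= 1) by (apply p2_le1; auto). nra.
Qed.

Lemma p2_lt (q : R) (a b : nat) : 0 < q -> q < 1 -> (a < b)%nat -> (q^2)^b <= q^2 * (q^2)^a.
Proof.
  intros. replace b with (S a + (b - S a))%nat by lia. rewrite p2_add.
  change ((q^2)^(S a)) with (q^2 * (q^2)^a).
  assert (0 < (q^2)^a) by (apply p2_pos; auto).
  assert ((q^2)^(b - S a) <= 1) by (apply p2_le1; auto).
  assert (0 < q^2 * (q^2)^a) by (apply Rmult_lt_0_compat; nra).
  nra.
Qed.

Ltac qfacts q :=
  let h1 := fresh in let h2 := fresh in let h3 := fresh in let h4 := fresh in
  let h5 := fresh in let h6 := fresh in
  assert (h1 : 0 < q^2 < 1) by (split; nra);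
  assert (h2 : 0 < q^3 < 1) by (split; simpl; nra);
  assert (h3 : 0 < q^4 < 1) by (split; simpl; nra);
  assert (h4 : 0 < q^5 < 1) by (split; simpl; nra);
  assert (h5 : 0 < q^6 < 1) by (split; simpl; nra);
  idtac.
Lemma m01 (a b : R) : 0 < a <= 1 -> 0 < b <= 1 -> 0 < a*b <= 1.
Proof. intros; split; nra. Qed.
Lemma m01s (a b : R) : 0 < a < 1 -> 0 < b <= 1 -> 0 < a*b < 1.
Proof. intros; split; nra. Qed.
Lemma m01s' (a b : R) : 0 < a <= 1 -> 0 < b < 1 -> 0 < a*b < 1.
Proof. intros; split; nra. Qed.

Ltac le01 := first [ apply m01; le01 | (split; lra) ].
Ltac lt01 := first [ (split; lra) | apply m01s; [lt01 | le01] | apply m01s'; [le01 | lt01] ].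
Ltac nzt := match goal with
 | |- 1 - ?e <> 0 => apply Rgt_not_eq; assert (0 < e < 1) by lt01; lra
 | |- 1 + ?e <> 0 => apply Rgt_not_eq; assert (0 < e < 1) by lt01; lra
 | |- ?e - 1 <> 0 => apply Rlt_not_eq; assert (0 < e < 1) by lt01; lra
 | |- ?e <> 0 => first [ assumption | apply Rgt_not_eq; lra | apply Rlt_not_eq; lra | idtac ]
end.

Lemma key1 (q X u : R) : 0 < q < 1 -> 0 < X <= 1 -> 0 < u <= 1 ->
  X*q - u <> 0 -> X - q*u <> 0 ->
  R2 q (q^2*X) u * (1 - q^2*u/(X*q^2)) * Ep q X u
  = (1 - u/(X*q^2)) * R2 q X u * Ep q X (q^2*u).
Proof.
  intros Hq HX Hu H1 H2. qfacts q.
  unfold R2, Ep, Tq. field. repeat split; nzt.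
  replace (q^2*X - q*u) with (q*(X*q - u)) by ring.
  apply Rmult_integral_contrapositive_currified; [lra|auto].
Qed.

Lemma key2 (q X : R) : 0 < q < 1 -> 0 < X <= 1 ->
  R2 q (q^2*X) X * Ep q X X / (1 - X/(X*q^2))
  = Krp q X X * Nn q X (q^2*X) / (X*q^4*X*(1+q^3*X)).
Proof.
  intros Hq HX. qfacts q.
  unfold R2, Ep, Krp, Nn, cN0, cN1, cN2, cN3, cN4, Tq. field. repeat split; nzt.
  replace (q^2*X - q*X) with (q*X*(q-1)) by ring.
  repeat apply Rmult_integral_contrapositive_currified; lra.
Qed.

Lemma keyTI (q X u : R) : 0 < q < 1 -> 0 < X <= 1 -> 0 < u <= 1 ->
  X*q - u <> 0 -> X - q*u <> 0 -> X*q^2 - u <> 0 ->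
  Ep q X u / (1 - u/(X*q^2)) - rho q X =
  - Krp q X u * Nn q X (q^2*u) / (X*q^4*u*(1+q^3*u))
  + Nn q X u / ((1 - u/(X*q^2)) * X*q^2*u*(1+q*u)).
Proof.
  intros Hq HX Hu H1 H2 H3. qfacts q.
  unfold Ep, rho, Krp, Nn, cN0, cN1, cN2, cN3, cN4, Tq. field. repeat split; nzt.
Qed.

Lemma keyG (q X v : R) : 0 < q < 1 -> 0 < X <= 1 -> 0 < v <= 1 -> X - q*v <> 0 ->
  Krp q X v * (1 - v/X) = R2 q X v.
Proof.
  intros Hq HX Hv H2. qfacts q.
  unfold R2, Krp, Tq. field. repeat split; nzt.
Qed.

Lemma keyB (q X : R) : 0 < q < 1 -> 0 < X <= 1 ->
  Tq q 1 * (1 - 1/(X*q^2)) = Tq q 1 * Ep q X 1.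
Proof.
  intros Hq HX. qfacts q.
  unfold Ep, Tq. field. repeat split; nzt.
Qed.

Lemma Ff_S (q : R) (n k : nat) : Ff q n (S k) = Ff q n k * R2 q ((q^2)^n) ((q^2)^k).
Proof. reflexivity. Qed.

Lemma p2S (q : R) (n : nat) : (q^2)^(S n) = q^2 * (q^2)^n.
Proof. reflexivity. Qed.

Lemma pf1 (q : R) (n k : nat) : 0 < q < 1 -> (q^2)^n * q - (q^2)^k <> 0.
Proof.
  intros Hq. assert (0 < (q^2)^n) by (apply p2_pos; lra).
  assert (0 < (q^2)^k) by (apply p2_pos; lra).
  destruct (le_lt_dec k n) as [h|h].
  - assert ((q^2)^n <= (q^2)^k) by (apply p2_le; lia || lra). nra.
  - assert ((q^2)^k <= q^2*(q^2)^n) by (apply p2_lt; lia || lra). nra.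
Qed.

Lemma pf2 (q : R) (n k : nat) : 0 < q < 1 -> (q^2)^n - q * (q^2)^k <> 0.
Proof.
  intros Hq. assert (0 < (q^2)^n) by (apply p2_pos; lra).
  assert (0 < (q^2)^k) by (apply p2_pos; lra).
  destruct (le_lt_dec n k) as [h|h].
  - assert ((q^2)^k <= (q^2)^n) by (apply p2_le; lia || lra). nra.
  - assert ((q^2)^n <= q^2*(q^2)^k) by (apply p2_lt; lia || lra). nra.
Qed.

Lemma pf3 (q : R) (n k : nat) : 0 < q < 1 -> (k <= n)%nat -> (q^2)^n * q^2 - (q^2)^k <> 0.
Proof.
  intros Hq h. assert (0 < (q^2)^n) by (apply p2_pos; lra).
  assert (0 < (q^2)^k) by (apply p2_pos; lra).
  assert ((q^2)^n <= (q^2)^k) by (apply p2_le; lia || lra).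
  assert (0 < q^2 < 1) by (split; nra). nra.
Qed.

Lemma p2b (q : R) (m : nat) : 0 < q < 1 -> 0 < (q^2)^m <= 1.
Proof. intros; split; [apply p2_pos | apply p2_le1]; lra. Qed.

Lemma L1 (q : R) (n k : nat) : 0 < q < 1 ->
  Ff q (S n) k * (1 - (q^2)^k/((q^2)^n*q^2)) = Ff q n k * Ep q ((q^2)^n) ((q^2)^k).
Proof.
  intros Hq. induction k.
  - change ((q^2)^0) with 1. simpl Ff. apply keyB; auto. apply p2b; auto.
  - rewrite !Ff_S, !p2S.
    set (X := (q^2)^n) in *. set (u := (q^2)^k) in *.
    assert (HX : 0 < X <= 1) by (apply p2b; auto).
    assert (Hu : 0 < u <= 1) by (apply p2b; auto).
    assert (H1 : X*q - u <> 0) by (apply pf1; auto).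
    assert (H2 : X - q*u <> 0) by (apply pf2; auto).
    qfacts q.
    assert (HE : Ep q X u <> 0).
    { unfold Ep. apply Rmult_integral_contrapositive_currified.
      - repeat apply Rmult_integral_contrapositive_currified; try nzt.
        + apply Rlt_not_eq. assert (0 < X*q^2 < 1) by lt01.
          assert (/(X*q^2) > 1). { rewrite <- Rinv_1. apply Rinv_lt_contravar; lra. } lra.
        + intro Hc. apply H1. assert (Hd: u/(X*q) = 1) by lra.
          replace u with (u/(X*q)*(X*q)) by (field; repeat split; lra). rewrite Hd. ring.
      - apply Rinv_neq_0_compat. repeat apply Rmult_integral_contrapositive_currified; try nzt.
        apply Rlt_not_eq. assert (0 < X*q < 1) by lt01.
        assert (/(X*q) > 1). { rewrite <- Rinv_1. apply Rinv_lt_contravar; lra. } lra. }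
    apply (Rmult_eq_reg_r (Ep q X u)); [|exact HE].
    replace (Ff q (S n) k * R2 q (q^2*X) u * (1 - q^2*u/(X*q^2)) * Ep q X u)
      with (Ff q (S n) k * (R2 q (q^2*X) u * (1 - q^2*u/(X*q^2)) * Ep q X u)) by ring.
    rewrite key1; auto.
    replace (Ff q (S n) k * ((1 - u / (X * q ^ 2)) * R2 q X u * Ep q X (q ^ 2 * u)))
      with ((Ff q (S n) k * (1 - u / (X * q ^ 2))) * (R2 q X u * Ep q X (q ^ 2 * u))) by ring.
    rewrite IHk. ring.
Qed.

Lemma Fzero (q : R) (n : nat) : Ff q n (S n) = 0.
Proof. rewrite Ff_S. unfold R2. rewrite Rminus_diag. unfold Rdiv. ring. Qed.

Lemma Nn1 (q X : R) : Nn q X 1 = 0.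
Proof.
  unfold Nn, cN0, cN1, cN2, cN3, cN4.
  match goal with |- ?a / ?b = 0 => replace a with 0 by ring end.
  unfold Rdiv; ring.
Qed.

Lemma Gform (q : R) (n k : nat) : 0 < q < 1 -> (k <= n)%nat ->
  Gf q n k = - Ff q n k * Nn q ((q^2)^n) ((q^2)^k)
     / ((1 - (q^2)^k/((q^2)^n*q^2)) * (q^2)^n*q^2*(q^2)^k*(1+q*(q^2)^k)).
Proof.
  intros Hq hk. destruct k as [|j].
  - change ((q^2)^0) with 1. rewrite Nn1. simpl Gf. unfold Rdiv; ring.
  - rewrite Ff_S, p2S. unfold Gf.
    set (X := (q^2)^n) in *. set (v := (q^2)^j) in *.
    assert (HX : 0 < X <= 1) by (apply p2b; auto).
    assert (Hv : 0 < v <= 1) by (apply p2b; auto).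
    assert (H2 : X - q*v <> 0) by (apply pf2; auto).
    assert (H3 : X <= q^2 * v) by (apply p2_lt; lia || lra).
    qfacts q.
    rewrite <- (keyG q X v); auto.
    unfold Krp, Tq. field. repeat split; try nzt; try (apply Rgt_not_eq; lra).
    apply Rlt_not_eq. nra.
Qed.

Lemma TI (q : R) (n k : nat) : 0 < q < 1 -> (k <= n)%nat ->
  Ff q (S n) k - rho q ((q^2)^n) * Ff q n k = Gf q n (S k) - Gf q n k.
Proof.
  intros Hq hk.
  rewrite (Gform q n k Hq hk).
  pose proof (L1 q n k Hq) as HL.
  unfold Gf.
  set (X := (q^2)^n) in *. set (u := (q^2)^k) in *.
  assert (HX : 0 < X <= 1) by (apply p2b; auto).
  assert (Hu : 0 < u <= 1) by (apply p2b; auto).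
  assert (H1 : X*q - u <> 0) by (apply pf1; auto).
  assert (H2 : X - q*u <> 0) by (apply pf2; auto).
  assert (H3 : X*q^2 - u <> 0) by (apply pf3; auto).
  assert (Hc : 1 - u/(X*q^2) <> 0).
  { intro Hc. apply H3. assert (Hd: u/(X*q^2) = 1) by lra.
    replace u with (u/(X*q^2)*(X*q^2)) by (field; repeat split; nra). rewrite Hd. ring. }
  assert (E : Ff q (S n) k = Ff q n k * (Ep q X u / (1 - u/(X*q^2)))).
  { apply (Rmult_eq_reg_r (1 - u/(X*q^2))); [|exact Hc].
    rewrite HL. field. repeat split; auto; lra. }
  rewrite E.
  transitivity (Ff q n k * (Ep q X u / (1 - u / (X * q ^ 2)) - rho q X)); [ring|].
  rewrite keyTI; auto. unfold Rdiv. ring.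
Qed.

Lemma TIlast (q : R) (n : nat) : 0 < q < 1 ->
  Ff q (S n) (S n) - rho q ((q^2)^n) * Ff q n (S n) = Gf q n (S (S n)) - Gf q n (S n).
Proof.
  intros Hq.
  unfold Gf at 1. rewrite !Fzero.
  pose proof (L1 q n n Hq) as HL.
  rewrite Ff_S, p2S. unfold Gf.
  set (X := (q^2)^n) in *.
  assert (HX : 0 < X <= 1) by (apply p2b; auto).
  assert (Hc : 1 - X/(X*q^2) <> 0).
  { replace (X/(X*q^2)) with (/q^2) by (field; split; lra).
    apply Rlt_not_eq. assert (0 < q^2 < 1) by (split; nra).
    assert (/q^2 > 1). { rewrite <- Rinv_1. apply Rinv_lt_contravar; lra. } lra. }
  assert (E : Ff q (S n) n = Ff q n n * (Ep q X X / (1 - X/(X*q^2)))).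
  { apply (Rmult_eq_reg_r (1 - X/(X*q^2))); [|exact Hc].
    rewrite HL. assert (0 < q^2 < 1) by (split; nra).
    field. repeat split; auto; try lra; try (apply Rlt_not_eq; nra). }
  rewrite E.
  transitivity (Ff q n n * (R2 q (q^2*X) X * Ep q X X / (1 - X/(X*q^2)))); [unfold Rdiv; ring|].
  rewrite key2; auto. unfold Rdiv. ring.
Qed.

Lemma tele (h G : nat -> R) (m : nat) :
  (forall k, (k <= m)%nat -> h k = G (S k) - G k) -> sum_f_R0 h m = G (S m) - G O.
Proof.
  induction m; intros H.
  - simpl. apply H. lia.
  - simpl. rewrite IHm by (intros; apply H; lia). rewrite (H (S m)) by lia. ring.
Qed.

Lemma sum_lin (f g : nat -> R) (c : R) (m : nat) :
  sum_f_R0 (fun k => f k - c * g k) m = sum_f_R0 f m - c * sum_f_R0 g m.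
Proof. induction m; simpl; [ring|rewrite IHm; ring]. Qed.

Lemma Srec (q : R) (n : nat) : 0 < q < 1 ->
  sum_f_R0 (Ff q (S n)) (S n) = rho q ((q^2)^n) * sum_f_R0 (Ff q n) n.
Proof.
  intros Hq.
  assert (T : sum_f_R0 (fun k => Ff q (S n) k - rho q ((q^2)^n) * Ff q n k) (S n)
              = Gf q n (S (S n)) - Gf q n O).
  { apply tele. intros k hk. destruct (le_lt_dec k n) as [h|h].
    - apply TI; auto.
    - replace k with (S n) by lia. apply TIlast; auto. }
  rewrite sum_lin in T.
  assert (G2 : Gf q n (S (S n)) = 0) by (unfold Gf; rewrite Fzero; unfold Rdiv; ring).
  rewrite G2 in T. simpl (Gf q n 0) in T.
  change (sum_f_R0 (Ff q n) (S n)) with (sum_f_R0 (Ff q n) n + Ff q n (S n)) in T.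
  rewrite Fzero in T. lra.
Qed.

Lemma pow_01 (b : R) (n : nat) : 0 < b <= 1 -> 0 < b^n <= 1.
Proof. intros. induction n; simpl; [lra|]. split; nra. Qed.

Lemma qp_pos (z b : R) (n : nat) : 0 <= z < 1 -> 0 < b <= 1 -> 0 < qpoch_fin z b n.
Proof.
  intros Hz Hb. induction n; simpl; [lra|].
  pose proof (pow_01 b n Hb). apply Rmult_lt_0_compat; [auto|nra].
Qed.

Definition QA (q : R) (n : nat) : R := qpoch_fin (q^2) (q^2) n.
Definition QB (q : R) (n : nat) : R := qpoch_fin q (q^2) n.
Definition Pfin (q : R) (n : nat) : R :=
  QA q (S n) * QA q n ^ 3 / (QB q (S n) ^ 3 * QB q n).

Lemma QA_S (q : R) (n : nat) : QA q (S n) = QA q n * (1 - q^2 * (q^2)^n).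
Proof. reflexivity. Qed.
Lemma QB_S (q : R) (n : nat) : QB q (S n) = QB q n * (1 - q * (q^2)^n).
Proof. reflexivity. Qed.

Lemma QA_pos (q : R) (n : nat) : 0 < q < 1 -> 0 < QA q n.
Proof. intros. apply qp_pos; split; nra. Qed.
Lemma QB_pos (q : R) (n : nat) : 0 < q < 1 -> 0 < QB q n.
Proof. intros. apply qp_pos; [lra | split; nra]. Qed.

Lemma S_eq_P (q : R) (n : nat) : 0 < q < 1 -> sum_f_R0 (Ff q n) n = Pfin q n.
Proof.
  intros Hq. induction n.
  - simpl sum_f_R0. simpl Ff. unfold Pfin, QA, QB, Tq. simpl qpoch_fin.
    field. repeat split; try (apply Rgt_not_eq || apply Rlt_not_eq); nra.
  - rewrite Srec, IHn by auto. unfold Pfin.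
    rewrite !QA_S, !QB_S, p2S.
    pose proof (QA_pos q n Hq). pose proof (QB_pos q n Hq).
    set (X := (q^2)^n) in *.
    assert (HX : 0 < X <= 1) by (apply p2b; auto).
    qfacts q.
    unfold rho. field. repeat split; try nzt; try (apply Rgt_not_eq; lra).
Qed.

Lemma cv_ext (u v : nat -> R) (l : R) : (forall n, u n = v n) -> Un_cv u l -> Un_cv v l.
Proof.
  intros He Hu eps Heps. destruct (Hu eps Heps) as [N HN]. exists N.
  intros n hn. rewrite <- He. auto.
Qed.

Lemma cv_const (c : R) : Un_cv (fun _ => c) c.
Proof. intros eps Heps. exists O. intros. unfold Rdist. rewrite Rminus_diag, Rabs_R0. lra. Qed.

Lemma cv_S (u : nat -> R) (l : R) : Un_cv u l -> Un_cv (fun n => u (S n)) l.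
Proof.
  intros Hu. apply (cv_ext (fun n => u (n + 1)%nat)).
  - intros n. f_equal. lia.
  - apply CV_shift'. auto.
Qed.

Lemma cv_inv (u : nat -> R) (l : R) : Un_cv u l -> l <> 0 -> Un_cv (fun n => / u n) (/ l).
Proof.
  intros Hu Hl.
  assert (Hc : continuity_pt (fun x => / x) l).
  { change (fun x => / x) with (/ id)%F.
    apply continuity_pt_inv; [apply derivable_continuous_pt, derivable_pt_id | exact Hl]. }
  exact (continuity_seq (fun x => / x) u l Hc Hu).
Qed.

Lemma cv_le (u : nat -> R) (a l : R) : (forall n, a <= u n) -> Un_cv u l -> a <= l.
Proof.
  intros Ha Hu. destruct (Rle_lt_dec a l) as [h|h]; auto.
  destruct (Hu (a - l)) as [N HN]; [lra|].
  specialize (HN N (Nat.le_refl N)). specialize (Ha N). unfold Rdist in HN.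
  apply Rabs_def2 in HN. lra.
Qed.

Lemma cv_p2 (q : R) : 0 < q < 1 -> Un_cv (fun n => (q^2)^n) 0.
Proof.
  intros Hq eps Heps.
  destruct (pow_lt_1_zero (q^2)) with eps as [N HN]; auto.
  - rewrite Rabs_right; [nra|nra].
  - exists N. intros n hn. unfold Rdist. rewrite Rminus_0_r. auto.
Qed.

Lemma cv_frac (X : nat -> R) (a1 b1 a2 b2 : R) : Un_cv X 0 -> a2 <> 0 ->
  Un_cv (fun n => (a1 + b1 * X n) / (a2 + b2 * X n)) (a1 / a2).
Proof.
  intros HX Ha.
  assert (H1 : Un_cv (fun n => a1 + b1 * X n) (a1 + b1 * 0)).
  { apply CV_plus; [apply cv_const|]. apply CV_mult; [apply cv_const|auto]. }
  rewrite Rmult_0_r, Rplus_0_r in H1.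
  assert (H2 : Un_cv (fun n => a2 + b2 * X n) (a2 + b2 * 0)).
  { apply CV_plus; [apply cv_const|]. apply CV_mult; [apply cv_const|auto]. }
  rewrite Rmult_0_r, Rplus_0_r in H2.
  unfold Rdiv. apply CV_mult; auto. apply cv_inv; auto.
Qed.

Lemma finite_cv (h : nat -> nat -> R) (K : nat) :
  (forall k, Un_cv (fun n => h n k) 0) -> Un_cv (fun n => sum_f_R0 (h n) K) 0.
Proof.
  intros H. induction K.
  - simpl. auto.
  - simpl. rewrite <- (Rplus_0_r 0). apply CV_plus; auto.
Qed.

Lemma tail_bound (q C : R) (h : nat -> R) (K m : nat) : 0 < q < 1 ->
  (forall k, Rabs (h k) <= C * q^k) ->
  Rabs (sum_f_R0 h (K + m) - sum_f_R0 h K) <= C * (q^(S K) - q^(S (K + m))) / (1 - q).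
Proof.
  intros Hq Hh. induction m.
  - rewrite Nat.add_0_r, Rminus_diag, Rabs_R0. unfold Rdiv. rewrite Rminus_diag. lra.
  - replace (K + S m)%nat with (S (K + m)) by lia. simpl sum_f_R0 at 1.
    replace (sum_f_R0 h (K + m) + h (S (K + m)) - sum_f_R0 h K)
      with ((sum_f_R0 h (K + m) - sum_f_R0 h K) + h (S (K + m))) by ring.
    eapply Rle_trans; [apply Rabs_triang|].
    specialize (Hh (S (K + m))).
    replace (C * (q ^ S K - q ^ S (S (K + m))) / (1 - q))
      with (C * (q ^ S K - q ^ S (K + m)) / (1 - q) + C * q ^ S (K + m)).
    + lra.
    + change (q ^ S (S (K + m))) with (q * q ^ S (K + m)). field. lra.
Qed.

Lemma tannery (q C : R) (f : nat -> nat -> R) (g : nat -> R) : 0 < q < 1 ->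
  (forall n k, Rabs (f n k) <= C * q^k) -> (forall k, Rabs (g k) <= C * q^k) ->
  (forall k, Un_cv (fun n => f n k) (g k)) ->
  Un_cv (fun n => sum_f_R0 (fun k => f n k - g k) n) 0.
Proof.
  intros Hq Hf Hg Hcv eps Heps.
  assert (HC : 0 <= C).
  { specialize (Hg O). simpl in Hg. pose proof (Rabs_pos (g O)). lra. }
  set (h := fun n k => f n k - g k).
  assert (Hh : forall n k, Rabs (h n k) <= (2*C) * q^k).
  { intros. unfold h. unfold Rminus. eapply Rle_trans; [apply Rabs_triang|].
    rewrite Rabs_Ropp. specialize (Hf n k). specialize (Hg k). lra. }
  set (y := eps * (1 - q) / (4 * (2*C + 1))).
  assert (Hy : 0 < y) by (unfold y; apply Rdiv_lt_0_compat; nra).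
  destruct (pow_lt_1_zero q) with y as [K HK]; [rewrite Rabs_right; lra | auto |].
  specialize (HK K (Nat.le_refl K)). rewrite Rabs_right in HK by (left; apply pow_lt; lra).
  assert (Hfin : Un_cv (fun n => sum_f_R0 (h n) K) 0).
  { apply finite_cv. intros k. unfold h. rewrite <- (Rminus_diag (g k)).
    apply CV_minus; [auto | apply cv_const]. }
  destruct (Hfin (eps/2)) as [N1 HN1]; [lra|].
  exists (Nat.max K N1). intros n hn.
  specialize (HN1 n ltac:(lia)). unfold Rdist in *. rewrite Rminus_0_r in *.
  change (sum_f_R0 (fun k => f n k - g k) n) with (sum_f_R0 (h n) n).
  pose proof (tail_bound q (2*C) (h n) K (n - K) Hq (Hh n)) as Ht.
  replace (K + (n - K))%nat with n in Ht by lia.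
  assert (Hb : 2 * C * (q ^ S K - q ^ S n) / (1 - q) <= eps / 4).
  { change (q ^ S K) with (q * q^K).
    assert (0 < q ^ S n) by (apply pow_lt; lra).
    assert (Hqk : q * q^K <= y) by (assert (0 < q^K) by (apply pow_lt; lra); nra).
    apply Rle_trans with (2 * C * y / (1 - q)).
    - unfold Rdiv. apply Rmult_le_compat_r; [apply Rlt_le, Rinv_0_lt_compat; lra|].
      apply Rmult_le_compat_l; lra.
    - unfold y. replace (2*C*(eps*(1-q)/(4*(2*C+1)))/(1-q)) with (eps/4 * (2*C/(2*C+1)))
        by (field; lra).
      assert (2*C/(2*C+1) <= 1).
      { apply (Rmult_le_reg_r (2*C+1)); [lra|]. unfold Rdiv.
        rewrite Rmult_assoc, Rinv_l by lra. lra. }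
      assert (0 <= 2*C/(2*C+1)) by (unfold Rdiv; apply Rmult_le_pos; [lra|apply Rlt_le, Rinv_0_lt_compat; lra]). nra. }
  replace (sum_f_R0 (h n) n) with (sum_f_R0 (h n) K + (sum_f_R0 (h n) n - sum_f_R0 (h n) K)) by ring.
  eapply Rle_lt_trans; [apply Rabs_triang|]. lra.
Qed.

Definition tk (q : R) (k : nat) : R := (1 + q ^ (2 * k + 1)) * q ^ k / (1 - q ^ (2 * k + 1)) ^ 2.

Lemma pw21 (q : R) (k : nat) : q^(2*k+1) = q * (q^2)^k.
Proof. rewrite pow_add, pow_mult. simpl (q^1). ring. Qed.

Lemma tk_eq (q : R) (k : nat) : 0 < q < 1 -> tk q k = Tq q ((q^2)^k) * q^k.
Proof.
  intros Hq. unfold tk, Tq. rewrite pw21.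
  assert (Hu : 0 < (q^2)^k <= 1) by (apply p2b; auto).
  field. apply Rgt_not_eq. nra.
Qed.

Lemma Tq_nz (q u : R) : 0 < q < 1 -> 0 < u <= 1 -> Tq q u <> 0.
Proof.
  intros. unfold Tq. apply Rgt_not_eq. apply Rdiv_lt_0_compat; [nra|].
  apply pow_lt. nra.
Qed.

Lemma tk_S (q : R) (k : nat) : 0 < q < 1 ->
  tk q (S k) = tk q k * (Tq q (q^2 * (q^2)^k) / Tq q ((q^2)^k) * q).
Proof.
  intros Hq. rewrite !tk_eq, p2S by auto.
  assert (Hu : 0 < (q^2)^k <= 1) by (apply p2b; auto).
  pose proof (Tq_nz q ((q^2)^k) Hq Hu).
  change (q ^ S k) with (q * q^k). field. auto.
Qed.

Lemma R2_lim (q u : R) : 0 < q < 1 -> 0 < u <= 1 ->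
  Un_cv (fun n => R2 q ((q^2)^n) u) (Tq q (q^2*u) / Tq q u * q).
Proof.
  intros Hq Hu. pose proof (cv_p2 q Hq) as HX.
  assert (H1 : Un_cv (fun n => (1 - q^3*(q^2)^n*u) / (1 - q^4*(q^2)^n*u)) (1/1)).
  { apply (cv_ext (fun n => (1 + (-(q^3*u)) * (q^2)^n) / (1 + (-(q^4*u)) * (q^2)^n))).
    - intros n. unfold Rdiv. f_equal; [ring | f_equal; ring].
    - apply cv_frac; auto; lra. }
  assert (H2 : Un_cv (fun n => ((q^2)^n - u) / ((q^2)^n - q*u)) ((-u)/(-(q*u)))).
  { apply (cv_ext (fun n => (-u + 1 * (q^2)^n) / (-(q*u) + 1 * (q^2)^n))).
    - intros n. unfold Rdiv. f_equal; [ring | f_equal; ring].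
    - apply cv_frac; auto; nra. }
  apply (cv_ext (fun n => (Tq q (q^2*u) / Tq q u) *
           ((1 - q^3*(q^2)^n*u) / (1 - q^4*(q^2)^n*u)) *
           (q^2 * (((q^2)^n - u) / ((q^2)^n - q*u))))).
  - intros n. unfold R2, Rdiv. ring.
  - replace (Tq q (q^2*u) / Tq q u * q)
      with (Tq q (q^2*u) / Tq q u * (1/1) * (q^2 * ((-u)/(-(q*u))))).
    2:{ pose proof (Tq_nz q u Hq Hu). field. repeat split; auto; nra. }
    apply CV_mult; [apply CV_mult; [apply cv_const | auto] |].
    apply CV_mult; [apply cv_const | auto].
Qed.

Lemma F_lim (q : R) (k : nat) : 0 < q < 1 -> Un_cv (fun n => Ff q n k) (tk q k).
Proof.
  intros Hq. induction k.
  - rewrite tk_eq by auto. simpl Ff. change ((q^2)^0) with 1. rewrite pow_O, Rmult_1_r.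
    apply cv_const.
  - rewrite tk_S by auto.
    apply (cv_ext (fun n => Ff q n k * R2 q ((q^2)^n) ((q^2)^k))); [reflexivity|].
    apply CV_mult; auto. apply R2_lim; auto. apply p2b; auto.
Qed.

Fixpoint aa (q : R) (n k : nat) : R :=
  match k with
  | O => 1
  | S j => aa q n j * ((1 - q^3*(q^2)^n*(q^2)^j) / (1 - q^4*(q^2)^n*(q^2)^j))
  end.

Fixpoint HH (q : R) (n k : nat) : R :=
  match k with
  | O => 1
  | S j => HH q n j * (q*((q^2)^n - (q^2)^j) / ((q^2)^n - q*(q^2)^j))
  end.

Lemma aa_S (q : R) (n k : nat) :
  aa q n (S k) = aa q n k * ((1 - q^3*(q^2)^n*(q^2)^k) / (1 - q^4*(q^2)^n*(q^2)^k)).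
Proof. reflexivity. Qed.
Lemma HH_S (q : R) (n k : nat) :
  HH q n (S k) = HH q n k * (q*((q^2)^n - (q^2)^k) / ((q^2)^n - q*(q^2)^k)).
Proof. reflexivity. Qed.

Lemma F_fact (q : R) (n k : nat) : 0 < q < 1 -> Ff q n k = tk q k * aa q n k * HH q n k.
Proof.
  intros Hq. induction k.
  - rewrite tk_eq by auto. simpl. change ((q^2)^0) with 1. ring.
  - rewrite Ff_S, IHk, tk_S, aa_S, HH_S by auto.
    set (X := (q^2)^n). set (u := (q^2)^k).
    assert (HX : 0 < X <= 1) by (apply p2b; auto).
    assert (Hu : 0 < u <= 1) by (apply p2b; auto).
    assert (H2 : X - q*u <> 0) by (apply pf2; auto).
    qfacts q.
    unfold R2, Tq. field. repeat split; try nzt.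
Qed.

Lemma frac01 (a b : R) : 0 < b <= a -> a < 1 -> 0 < (1 - a) / (1 - b) <= 1.
Proof.
  intros. split.
  - apply Rdiv_lt_0_compat; lra.
  - apply (Rmult_le_reg_r (1 - b)); [lra|]. unfold Rdiv.
    rewrite Rmult_assoc, Rinv_l by lra. lra.
Qed.

Lemma aa_bd (q : R) (n k : nat) : 0 < q < 1 -> 0 < aa q n k <= 1.
Proof.
  intros Hq. induction k; [simpl; lra|]. rewrite aa_S.
  assert (HX : 0 < (q^2)^n <= 1) by (apply p2b; auto).
  assert (Hu : 0 < (q^2)^k <= 1) by (apply p2b; auto).
  qfacts q.
  assert (0 < (1 - q^3*(q^2)^n*(q^2)^k) / (1 - q^4*(q^2)^n*(q^2)^k) <= 1).
  { apply frac01.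
    - split; [lt01|]. assert (0 < (q^2)^n*(q^2)^k) by nra.
      replace (q^4*(q^2)^n*(q^2)^k) with (q*(q^3*((q^2)^n*(q^2)^k))) by ring.
      replace (q^3*(q^2)^n*(q^2)^k) with (q^3*((q^2)^n*(q^2)^k)) by ring.
      assert (0 < q^3*((q^2)^n*(q^2)^k)) by nra.
      set (w := q^3*((q^2)^n*(q^2)^k)) in *. nra.
    - assert (0 < q^3*(q^2)^n*(q^2)^k < 1) by lt01. lra. }
  split; nra.
Qed.

Definition beta (q : R) (m : nat) : R := QA q m / QB q m.

Lemma beta_S (q : R) (m : nat) : 0 < q < 1 ->
  beta q (S m) = beta q m * ((1 - q^2*(q^2)^m) / (1 - q*(q^2)^m)).
Proof.
  intros Hq. unfold beta. rewrite QA_S, QB_S.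
  pose proof (QB_pos q m Hq). assert (Hw : 0 < (q^2)^m <= 1) by (apply p2b; auto).
  field. split; [apply Rgt_not_eq; nra | lra].
Qed.

Lemma beta_pos (q : R) (m : nat) : 0 < q < 1 -> 0 < beta q m.
Proof. intros. unfold beta. apply Rdiv_lt_0_compat; [apply QA_pos|apply QB_pos]; auto. Qed.

Lemma beta_grow (q : R) : 0 < q < 1 -> Un_growing (beta q).
Proof.
  intros Hq m. rewrite beta_S by auto. pose proof (beta_pos q m Hq).
  assert (Hw : 0 < (q^2)^m <= 1) by (apply p2b; auto).
  assert (1 <= (1 - q^2*(q^2)^m) / (1 - q*(q^2)^m)).
  { apply (Rmult_le_reg_r (1 - q*(q^2)^m)); [nra|]. unfold Rdiv.
    rewrite Rmult_assoc, Rinv_l by nra.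
    assert (q^2*(q^2)^m <= q*(q^2)^m) by (apply Rmult_le_compat_r; nra). lra. }
  nra.
Qed.

Lemma beta_ge1 (q : R) (m : nat) : 0 < q < 1 -> 1 <= beta q m.
Proof.
  intros Hq. induction m.
  - unfold beta, QA, QB. simpl. lra.
  - pose proof (beta_grow q Hq m). lra.
Qed.

Lemma HH_beta (q : R) (k m : nat) : 0 < q < 1 -> HH q (m + k) k = beta q (m + k) / beta q m.
Proof.
  intros Hq. revert m. induction k; intros m.
  - simpl. rewrite Nat.add_0_r. pose proof (beta_pos q m Hq). field. lra.
  - rewrite HH_S. replace (m + S k)%nat with (S m + k)%nat by lia.
    rewrite IHk. rewrite (beta_S q m Hq).
    rewrite p2_add, p2S.
    set (W := (q^2)^m). set (u := (q^2)^k).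
    assert (HW : 0 < W <= 1) by (apply p2b; auto).
    assert (Hu : 0 < u <= 1) by (apply p2b; auto).
    pose proof (beta_pos q m Hq). pose proof (beta_pos q (S m + k) Hq).
    qfacts q.
    field. repeat split; try nzt; try (apply Rgt_not_eq; nra); try (apply Rlt_not_eq; nra).
    replace (q^2*W*u - q*u) with (q*u*(q*W - 1)) by ring.
    apply Rmult_integral_contrapositive_currified; [nra|]. apply Rlt_not_eq. nra.
Qed.

Lemma HH_zero (q : R) (n k : nat) : (n < k)%nat -> HH q n k = 0.
Proof.
  induction k; intros h; [lia|].
  rewrite HH_S. destruct (Nat.eq_dec k n) as [e|e].
  - subst k. rewrite Rminus_diag. unfold Rdiv. ring.
  - rewrite IHk by lia. ring.
Qed.

Lemma beta_cv (q A B : R) : 0 < q < 1 -> B <> 0 ->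
  is_qpoch_inf (q ^ 2) (q ^ 2) A -> is_qpoch_inf q (q ^ 2) B ->
  Un_cv (beta q) (A / B).
Proof.
  intros Hq HB hA hB. unfold beta, Rdiv. apply CV_mult.
  - exact hA.
  - apply cv_inv; auto.
Qed.

Lemma HH_bd (q A B : R) (n k : nat) : 0 < q < 1 -> B <> 0 ->
  is_qpoch_inf (q ^ 2) (q ^ 2) A -> is_qpoch_inf q (q ^ 2) B ->
  0 <= HH q n k <= A / B.
Proof.
  intros Hq HB hA hB.
  pose proof (growing_ineq (beta q) (A/B) (beta_grow q Hq) (beta_cv q A B Hq HB hA hB)) as Hg.
  destruct (le_lt_dec k n) as [h|h].
  - replace n with ((n - k) + k)%nat by lia. rewrite HH_beta by auto.
    pose proof (beta_ge1 q (n - k) Hq). pose proof (beta_pos q (n - k + k) Hq).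
    specialize (Hg (n - k + k)%nat).
    split.
    + apply Rlt_le, Rdiv_lt_0_compat; lra.
    + apply Rle_trans with (beta q (n - k + k)); [|auto].
      apply (Rmult_le_reg_r (beta q (n - k))); [lra|]. unfold Rdiv.
      rewrite Rmult_assoc, Rinv_l by lra. nra.
  - rewrite HH_zero by auto. split; [lra|].
    pose proof (beta_ge1 q 0 Hq). specialize (Hg O). lra.
Qed.

Lemma Tq_bd (q s : R) : 0 < q < 1 -> 0 < s <= q -> 0 < (1+s)/(1-s)^2 <= (1+q)/(1-q)^2.
Proof.
  intros Hq Hs. split.
  - apply Rdiv_lt_0_compat; [lra|]. apply pow_lt; lra.
  - assert (0 < (1-s)^2) by (apply pow_lt; lra).
    assert (0 < (1-q)^2) by (apply pow_lt; lra).
    apply (Rmult_le_reg_r ((1-s)^2 * (1-q)^2)); [nra|].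
    replace ((1 + s) / (1 - s) ^ 2 * ((1 - s) ^ 2 * (1 - q) ^ 2)) with ((1+s)*(1-q)^2) by (field; lra).
    replace ((1 + q) / (1 - q) ^ 2 * ((1 - s) ^ 2 * (1 - q) ^ 2)) with ((1+q)*(1-s)^2) by (field; lra).
    assert ((1+q)*(1-s)^2 - (1+s)*(1-q)^2 = (q-s)*(3 - q - s - q*s)) by ring.
    assert (0 <= (q-s)*(3 - q - s - q*s)) by (apply Rmult_le_pos; nra).
    lra.
Qed.

Lemma tk_bd (q : R) (k : nat) : 0 < q < 1 -> 0 < tk q k <= (1+q)/(1-q)^2 * q^k.
Proof.
  intros Hq. rewrite tk_eq by auto. unfold Tq.
  assert (Hu : 0 < (q^2)^k <= 1) by (apply p2b; auto).
  pose proof (Tq_bd q (q*(q^2)^k) Hq ltac:(split; nra)).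
  assert (0 < q^k) by (apply pow_lt; lra).
  split; nra.
Qed.

Lemma F_bd (q A B : R) (n k : nat) : 0 < q < 1 -> B <> 0 ->
  is_qpoch_inf (q ^ 2) (q ^ 2) A -> is_qpoch_inf q (q ^ 2) B ->
  Rabs (Ff q n k) <= ((1+q)/(1-q)^2 * (A/B)) * q^k.
Proof.
  intros Hq HB hA hB. rewrite F_fact by auto.
  pose proof (tk_bd q k Hq). pose proof (aa_bd q n k Hq).
  pose proof (HH_bd q A B n k Hq HB hA hB).
  rewrite Rabs_right by (apply Rle_ge; apply Rmult_le_pos; [apply Rmult_le_pos|]; lra).
  set (T := tk q k) in *. set (a := aa q n k) in *. set (h := HH q n k) in *.
  set (M := (1+q)/(1-q)^2 * q^k) in *.
  assert (0 <= T * a <= M) by (split; nra).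
  replace ((1 + q) / (1 - q) ^ 2 * (A / B) * q ^ k) with (M * (A/B)) by (unfold M; ring).
  assert (0 <= T * a) by lra.
  apply Rmult_le_compat; lra.
Qed.

Lemma AB_ge1 (q A B : R) : 0 < q < 1 -> B <> 0 ->
  is_qpoch_inf (q ^ 2) (q ^ 2) A -> is_qpoch_inf q (q ^ 2) B -> 1 <= A / B.
Proof.
  intros Hq HB hA hB.
  pose proof (growing_ineq (beta q) (A/B) (beta_grow q Hq) (beta_cv q A B Hq HB hA hB) O).
  pose proof (beta_ge1 q 0 Hq). lra.
Qed.

Lemma QB_lb (q : R) (n : nat) : 0 < q < 1 ->
  1 <= QB q n * exp (q * (1 - (q^2)^n) / ((1 - q^2) * (1 - q))).
Proof.
  intros Hq. assert (0 < q^2 < 1) by (split; nra). induction n.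
  - unfold QB. simpl qpoch_fin. change ((q^2)^0) with 1.
    replace (q * (1 - 1) / ((1 - q ^ 2) * (1 - q))) with 0 by (field; lra).
    rewrite exp_0. lra.
  - rewrite QB_S, p2S. set (X := (q^2)^n) in *.
    assert (HX : 0 < X <= 1) by (apply p2b; auto).
    replace (q * (1 - q^2 * X) / ((1 - q ^ 2) * (1 - q)))
      with (q * (1 - X) / ((1 - q ^ 2) * (1 - q)) + q*X/(1-q)) by (field; lra).
    rewrite exp_plus.
    pose proof (exp_ineq1_le (q*X/(1-q))).
    assert (1 <= (1 - q*X) * exp (q*X/(1-q))).
    { apply Rle_trans with ((1 - q*X) * (1 + q*X/(1-q))).
      - replace ((1 - q*X) * (1 + q*X/(1-q))) with (1 + q*X*(q - q*X)/(1-q)) by (field; lra).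
        assert (0 <= q*X*(q - q*X)/(1-q)).
        { apply Rmult_le_pos; [apply Rmult_le_pos; nra | apply Rlt_le, Rinv_0_lt_compat; lra]. }
        lra.
      - apply Rmult_le_compat_l; nra. }
    pose proof (QB_pos q n Hq).
    pose proof (exp_pos (q * (1 - X) / ((1 - q ^ 2) * (1 - q)))).
    replace (QB q n * (1 - q * X) * (exp (q * (1 - X) / ((1 - q ^ 2) * (1 - q))) * exp (q * X / (1 - q))))
      with ((QB q n * exp (q * (1 - X) / ((1 - q ^ 2) * (1 - q)))) * ((1 - q * X) * exp (q * X / (1 - q)))) by ring.
    nra.
Qed.

Lemma B_pos (q B : R) : 0 < q < 1 -> is_qpoch_inf q (q ^ 2) B -> 0 < B.
Proof.
  intros Hq hB. assert (0 < q^2 < 1) by (split; nra).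
  set (c := q / ((1 - q^2) * (1 - q))).
  assert (Hcp : 0 < c) by (unfold c; apply Rdiv_lt_0_compat; nra).
  assert (Hc : forall n, / exp c <= QB q n).
  { intros n. pose proof (QB_lb q n Hq) as Hl.
    assert (Hx : 0 < (q^2)^n <= 1) by (apply p2b; auto).
    assert (Ha : q * (1 - (q ^ 2) ^ n) / ((1 - q ^ 2) * (1 - q)) = c * (1 - (q^2)^n))
      by (unfold c; field; lra).
    rewrite Ha in Hl.
    assert (exp (c * (1 - (q ^ 2) ^ n)) <= exp c).
    { destruct (Req_dec (c * (1 - (q ^ 2) ^ n)) c) as [e|e]; [rewrite e; lra|].
      left. apply exp_increasing. nra. }
    pose proof (QB_pos q n Hq). pose proof (exp_pos c).
    assert (1 <= QB q n * exp c) by nra.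
    apply (Rmult_le_reg_r (exp c)); [auto|]. rewrite Rinv_l by lra. lra. }
  pose proof (cv_le (QB q) (/ exp c) B Hc hB).
  pose proof (Rinv_0_lt_compat (exp c) (exp_pos c)). lra.
Qed.

Lemma cv_pow (u : nat -> R) (l : R) (m : nat) : Un_cv u l -> Un_cv (fun n => u n ^ m) (l ^ m).
Proof.
  intros Hu. induction m.
  - simpl. apply cv_const.
  - apply (cv_ext (fun n => u n * u n ^ m)); [reflexivity|]. simpl. apply CV_mult; auto.
Qed.

Lemma Pfin_cv (q A B : R) : 0 < q < 1 -> B <> 0 ->
  is_qpoch_inf (q ^ 2) (q ^ 2) A -> is_qpoch_inf q (q ^ 2) B ->
  Un_cv (Pfin q) (A * A^3 / (B^3 * B)).
Proof.
  intros Hq HB hA hB.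
  assert (cA : Un_cv (QA q) A) by exact hA.
  assert (cB : Un_cv (QB q) B) by exact hB.
  apply (cv_ext (fun n => (QA q (S n) * QA q n ^ 3) * / (QB q (S n) ^ 3 * QB q n))); [reflexivity|].
  unfold Rdiv. apply CV_mult.
  - apply CV_mult; [apply cv_S; auto | apply cv_pow; auto].
  - apply cv_inv.
    + apply CV_mult; [apply cv_pow, cv_S; auto | auto].
    + apply Rmult_integral_contrapositive_currified; [apply pow_nonzero|]; auto.
Qed.

Theorem mainTheorem15 (q A B : R) (hq0 : 0 < q) (hq1 : q < 1)
  (hA : is_qpoch_inf (q ^ 2) (q ^ 2) A)
  (hB : is_qpoch_inf q (q ^ 2) B) :
  infinite_sum
    (fun n : nat => (1 + q ^ (2 * n + 1)) * q ^ n / (1 - q ^ (2 * n + 1)) ^ 2)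
    ((gosper_pi_q q A B) ^ 2 / ((1 - q ^ 2) ^ 2 * Rpower q (1/2))).
Proof.
  assert (Hq : 0 < q < 1) by lra.
  pose proof (B_pos q B Hq hB) as HBp. assert (HB : B <> 0) by lra.
  pose proof (AB_ge1 q A B Hq HB hA hB) as HAB.
  set (C := (1+q)/(1-q)^2 * (A/B)).
  assert (Hg : forall k, Rabs (tk q k) <= C * q^k).
  { intros k. pose proof (tk_bd q k Hq). rewrite Rabs_right by lra.
    unfold C. assert (0 < q^k) by (apply pow_lt; lra).
    assert (0 < (1+q)/(1-q)^2) by (apply Rdiv_lt_0_compat; [lra|apply pow_lt; lra]).
    set (M := (1+q)/(1-q)^2) in *. nra. }
  pose proof (tannery q C (fun n k => Ff q n k) (tk q) Hq
                (fun n k => F_bd q A B n k Hq HB hA hB) Hg (fun k => F_lim q k Hq)) as HD.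
  pose proof (Pfin_cv q A B Hq HB hA hB) as HP.
  assert (Hsum : Un_cv (fun n => sum_f_R0 (tk q) n) (A * A^3 / (B^3 * B) - 0)).
  { apply (cv_ext (fun n => Pfin q n - sum_f_R0 (fun k => Ff q n k - tk q k) n)).
    - intros n. rewrite <- S_eq_P by auto.
      pose proof (sum_lin (Ff q n) (tk q) 1 n) as Hl.
      rewrite Rmult_1_l in Hl.
      replace (sum_f_R0 (fun k => Ff q n k - tk q k) n)
        with (sum_f_R0 (fun k => Ff q n k - 1 * tk q k) n).
      + rewrite Hl. ring.
      + apply sum_eq. intros. ring.
    - apply CV_minus; auto. }
  rewrite Rminus_0_r in Hsum.
  assert (Heq : gosper_pi_q q A B ^ 2 / ((1 - q^2)^2 * Rpower q (1/2)) = A * A^3 / (B^3 * B)).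
  { unfold gosper_pi_q.
    assert (Hr : Rpower q (1/2) = Rpower q (1/4) * Rpower q (1/4)).
    { unfold Rpower. rewrite <- exp_plus. f_equal. field. }
    assert (Hr4 : 0 < Rpower q (1/4)) by (unfold Rpower; apply exp_pos).
    rewrite Hr. field. repeat split; try lra. apply Rgt_not_eq. nra. }
  rewrite Heq. exact Hsum.
Qed.
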